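(* Let $V$ be a real vector space of dimension $2m$ with a positive definite symmetric bilinear form $d$ and a real-linear $J$ with $J^2=-1$ and $d(Ju,Jv)=d(u,v)$ for all $u,v$. Let $V_{\mathbb C}=V\otimes_{\mathbb R}\mathbb C$ with conjugation $w\mapsto\bar w$, and extend $d$ complex-bilinearly and real-linear operators complex-linearly to $V_{\mathbb C}$. Let $W\le V_{\mathbb C}$ be an admissible polarization, i.e. a complex subspace with $W\cap\overline W=\{0\}$, $W\oplus\overline W=V_{\mathbb C}$, and $d(w_1,w_2)=0$ for all $w_1,w_2\in W$; let $J_W\in\operatorname{End}_{\mathbb R}(V)$ be the (orthogonal, $J_W^2=-1$) operator with $W=\{\tfrac12(u-iJ_Wu):u\in V\}$, and let $W_J:=\{\tfrac12(u-iJu):u\in V\}$. Consider the complex-linear operator $B:=\tfrac12(1-J_WJ)$ on the Hilbert space $V_{\mathbb C}$ with inner product $\langle\langle w_1|w_2\rangle\rangle:=2d(\bar w_1,w_2)$. Then the adjoint of $B$ is $B^\dagger=\tfrac12(1-JJ_W)$, and $$\ker B=\ker B^\dagger=(W\cap\overline{W_J})\oplus(\overline W\cap W_J).$$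
   Context: For every admissible polarization $W$ (as defined in the claim) there is a unique real-linear $J_W$ on $V$ with $W=\{\tfrac12(u-iJ_Wu):u\in V\}$; it satisfies $J_W^2=-1$ and is orthogonal for $d$. *)

(* Defs.v *)
(* real closed field R (e.g. the reals), C := R[i]. *)
From HB Require Import structures.
From mathcomp Require Import all_boot all_order all_algebra.
From mathcomp Require Import complex.
Set Implicit Arguments. Unset Strict Implicit. Unset Printing Implicit Defensive.
Import Order.TTheory GRing.Theory Num.Theory.
Local Open Scope ring_scope.
Local Open Scope complex_scope.

(* V = R^n (column vectors 'cV[R]_n), V_C = C^n = 'cV[R[i]]_n.
   Real-linear operators on V are matrices 'M[R]_n acting on the left. *)

Definition cplx (R : rcfType) (p q : nat) (A : 'M[R]_(p, q)) : 'M[R[i]]_(p, q) :=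
  map_mx (fun x : R => x%:C) A.

Definition conjv (R : rcfType) (n : nat) (w : 'cV[R[i]]_n) : 'cV[R[i]]_n :=
  map_mx (@conjc R) w.

Definition dform (R : rcfType) (n : nat) (D : 'M[R]_n) (u v : 'cV[R]_n) : R :=
  (u^T *m D *m v) 0 0.

Definition dformC (R : rcfType) (n : nat) (D : 'M[R]_n) (w1 w2 : 'cV[R[i]]_n) : R[i] :=
  (w1^T *m cplx D *m w2) 0 0.

Definition hip (R : rcfType) (n : nat) (D : 'M[R]_n) (w1 w2 : 'cV[R[i]]_n) : R[i] :=
  2 * dformC D (conjv w1) w2.

Definition conjset (R : rcfType) (n : nat) (S : 'cV[R[i]]_n -> Prop) : 'cV[R[i]]_n -> Prop :=
  fun w => S (conjv w).

Definition polset (R : rcfType) (n : nat) (K : 'M[R]_n) : 'cV[R[i]]_n -> Prop :=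
  fun w => exists u : 'cV[R]_n, w = 2^-1 *: (cplx u - 'i *: cplx (K *m u)).

Definition complex_subspace (R : rcfType) (n : nat) (W : 'cV[R[i]]_n -> Prop) : Prop :=
  W 0 /\ (forall (a : R[i]) (x y : 'cV[R[i]]_n), W x -> W y -> W (a *: x + y)).

Definition admissible_polarization (R : rcfType) (n : nat) (D : 'M[R]_n)
    (W : 'cV[R[i]]_n -> Prop) : Prop :=
  [/\ complex_subspace W,
      (forall w, W w -> conjset W w -> w = 0),
      (forall w, exists a b, W a /\ conjset W b /\ w = a + b) &
      (forall w1 w2, W w1 -> W w2 -> dformC D w1 w2 = 0)].

(* Main.v *)
Require Import Defs.
From HB Require Import structures.
From mathcomp Require Import all_boot all_order all_algebra.
From mathcomp Require Import complex.
Import Order.TTheory GRing.Theory Num.Theory.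
Local Open Scope ring_scope.
Set Implicit Arguments. Unset Strict Implicit. Unset Printing Implicit Defensive.
Local Close Scope complex_scope.

Section H.
Variable R : rcfType.
Variable n : nat.
Implicit Types A B : 'M[R]_n.

Lemma cplxM p q r (A : 'M[R]_(p,q)) (B : 'M[R]_(q,r)) : cplx (A *m B) = cplx A *m cplx B.
Proof. exact: (map_mxM (real_complex R)). Qed.
Lemma cplxD p q (A B : 'M[R]_(p,q)) : cplx (A + B) = cplx A + cplx B.
Proof. exact: (map_mxD (real_complex R)). Qed.
Lemma cplxN p q (A : 'M[R]_(p,q)) : cplx (- A) = - cplx A.
Proof. exact: (map_mxN (real_complex R)). Qed.
Lemma cplxB p q (A B : 'M[R]_(p,q)) : cplx (A - B) = cplx A - cplx B.
Proof. by rewrite cplxD cplxN. Qed.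
Lemma cplx1 : cplx (1%:M : 'M[R]_n) = 1%:M.
Proof. exact: (map_mx1 (real_complex R)). Qed.
Lemma cplxZ p q (c : R) (A : 'M[R]_(p,q)) : cplx (c *: A) = real_complex R c *: cplx A.
Proof. by apply/matrixP => i j; rewrite !mxE /= rmorphM. Qed.
Lemma cplxT p q (A : 'M[R]_(p,q)) : cplx A^T = (cplx A)^T.
Proof. by apply/matrixP => i j; rewrite !mxE. Qed.

Lemma conjvK (w : 'cV[R[i]]_n) : conjv (conjv w) = w.
Proof. by apply/matrixP => i j; rewrite !mxE conjcK. Qed.
Lemma conjvD (w1 w2 : 'cV[R[i]]_n) : conjv (w1 + w2) = conjv w1 + conjv w2.
Proof. by apply/matrixP => i j; rewrite !mxE rmorphD. Qed.
Lemma conjvZ (a : R[i]) (w : 'cV[R[i]]_n) : conjv (a *: w) = a^* *: conjv w.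
Proof. by apply/matrixP => i j; rewrite !mxE rmorphM. Qed.
Lemma conjvM (A : 'M[R]_n) (w : 'cV[R[i]]_n) : conjv (cplx A *m w) = cplx A *m conjv w.
Proof.
rewrite /conjv (map_mxM (@conjc R)); congr (_ *m _).
by apply/matrixP => i j; rewrite !mxE /=; apply/eqP; rewrite eq_complex /= oppr0 !eqxx.
Qed.
Lemma conjv0 : conjv (0 : 'cV[R[i]]_n) = 0.
Proof. by apply/matrixP => i j; rewrite !mxE rmorph0. Qed.
Lemma conji : (Num.imaginary : R[i])^* = - Num.imaginary.
Proof. exact: conjCi. Qed.
Lemma ii : (Num.imaginary : R[i]) * Num.imaginary = -1.
Proof. exact: mulCii. Qed.

Lemma formP (M N : 'M[R]_n) :
  (forall u v : 'cV[R]_n, (u^T *m M *m v) 0 0 = (u^T *m N *m v) 0 0) -> M = N.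
Proof.
move=> H; apply/matrixP => i j.
have := H (delta_mx i 0) (delta_mx j 0).
rewrite trmx_delta -!rowE -!colE !mxE.
by [].
Qed.
Lemma iiZ (V : lmodType R[i]) (x : V) : 'i *: ('i *: x) = - x.
Proof. by rewrite scalerA ii scaleN1r. Qed.

Lemma half2 (V : lmodType R[i]) (x y : V) : 2^-1 *: (x + y + (x - y)) = x.
Proof.
rewrite addrACA subrr addr0 -mulr2n -(scaler_nat 2 x) scalerA mulVf ?scale1r //.
by rewrite pnatr_eq0.
Qed.

Lemma cplxKK (K : 'M[R]_n) (x : 'cV[R[i]]_n) : K *m K = - 1%:M ->
  cplx K *m (cplx K *m x) = - x.
Proof. by move=> HK; rewrite mulmxA -cplxM HK cplxN cplx1 mulNmx mul1mx. Qed.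

Lemma polsetP (K : 'M[R]_n) (w : 'cV[R[i]]_n) : K *m K = - 1%:M ->
  (polset K w <-> cplx K *m w = 'i *: w).
Proof.
move=> HK; split.
  case=> u ->; rewrite -!scalemxAr mulmxBr -!scalemxAr -!cplxM mulmxA HK.
  rewrite mulNmx mul1mx cplxN scalerN opprK.
  rewrite !scalerA mulrC -!scalerA; congr (_ *: _).
  by rewrite scalerBr iiZ opprK addrC.
move=> H.
pose u : 'cV[R]_n := map_mx (fun z : R[i] => 2 * complex.Re z) w.
have Hu : cplx u = w + conjv w.
  apply/matrixP => i j; rewrite !mxE /= rmorphM /= ReJ_add rmorph_nat.
  by rewrite mulrC divfK // pnatr_eq0.
exists u; rewrite cplxM Hu mulmxDr -conjvM H conjvZ.
rewrite conjCi scaleNr.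
rewrite (scalerBr 'i) !iiZ.
rewrite opprK opprD opprK.
by rewrite half2.
Qed.

Lemma cpolsetP (K : 'M[R]_n) (w : 'cV[R[i]]_n) : K *m K = - 1%:M ->
  (conjset (polset K) w <-> cplx K *m w = - 'i *: w).
Proof.
move=> HK; rewrite /conjset polsetP //; split => H.
  by have := congr1 (@conjv _ _) H; rewrite conjvM conjvK conjvZ conjCi conjvK.
by rewrite -conjvM H conjvZ; congr (_ *: _); rewrite -conjCi conjCK.
Qed.

Lemma kerP (P Q : 'M[R]_n) (w : 'cV[R[i]]_n) :
  cplx (2^-1 *: (1%:M - P *m Q)) *m w = 0 <-> cplx P *m (cplx Q *m w) = w.
Proof.
rewrite cplxZ cplxB cplx1 cplxM -scalemxAl mulmxBl mul1mx -mulmxA.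
split => [/eqP|H].
  rewrite scaler_eq0 subr_eq0 => /orP[|/eqP //].
  by rewrite rmorphV ?unitfE ?pnatr_eq0 // rmorph_nat invr_eq0 pnatr_eq0.
by rewrite H subrr scaler0.
Qed.

Lemma swapP (P Q : 'M[R]_n) (w : 'cV[R[i]]_n) : P *m P = - 1%:M -> Q *m Q = - 1%:M ->
  cplx P *m (cplx Q *m w) = w -> cplx Q *m (cplx P *m w) = w.
Proof.
move=> HP HQ H; rewrite -{1}H cplxKK // mulmxN cplxKK // opprK //.
Qed.

Lemma orthP (D K : 'M[R]_n) : K *m K = - 1%:M ->
  (forall u v, dform D (K *m u) (K *m v) = dform D u v) -> K^T *m D = - (D *m K).
Proof.
move=> HK H.
have E : K^T *m D *m K = D.
  apply: formP => u v; rewrite -[RHS]H /dform trmx_mul !mulmxA //.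
have := congr1 (mulmx^~ K) E; rewrite /= -mulmxA HK mulmxN mulmx1 => <-; by rewrite opprK.
Qed.
End H.

Local Open Scope complex_scope.

Theorem proposition2p8 (R : rcfType) (m : nat)
  (D : 'M[R]_(m.*2)) (J JW : 'M[R]_(m.*2)) (W : 'cV[R[i]]_(m.*2) -> Prop) :
  D^T = D ->
  (forall u : 'cV[R]_(m.*2), u != 0 -> 0 < dform D u u) ->
  J *m J = - 1%:M ->
  (forall u v, dform D (J *m u) (J *m v) = dform D u v) ->
  admissible_polarization D W ->
  JW *m JW = - 1%:M ->
  (forall u v, dform D (JW *m u) (JW *m v) = dform D u v) ->
  (forall w, W w <-> polset JW w) ->
  let B := cplx (2^-1 *: (1%:M - JW *m J)) in
  let Bdag := cplx (2^-1 *: (1%:M - J *m JW)) in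
  let WJ := polset J in
  (forall w1 w2 : 'cV[R[i]]_(m.*2), hip D (B *m w1) w2 = hip D w1 (Bdag *m w2)) /\
  (forall w : 'cV[R[i]]_(m.*2), B *m w = 0 <-> Bdag *m w = 0) /\
  (forall w : 'cV[R[i]]_(m.*2), B *m w = 0 <->
     exists a b, (W a /\ conjset WJ a) /\ (conjset W b /\ WJ b) /\ w = a + b) /\
  (forall w : 'cV[R[i]]_(m.*2), (W w /\ conjset WJ w) -> (conjset W w /\ WJ w) -> w = 0).
Proof.
move=> DT Dpos HJ HJd HW HJW HJWd hW B Bdag WJ.
have oJ := orthP HJ HJd.
have oJW := orthP HJW HJWd.
have hcW w : conjset W w <-> conjset (polset JW) w by rewrite /conjset hW.
split.
  have key : (2^-1 *: (1%:M - JW *m J))^T *m D = D *m (2^-1 *: (1%:M - J *m JW)).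
    rewrite linearZ /= linearB /= trmx1 trmx_mul -scalemxAl -scalemxAr.
    rewrite mulmxBl mulmxBr mul1mx mulmx1 -mulmxA oJW mulmxN mulmxA oJ mulNmx opprK.
    by rewrite mulmxA.
  have key' : (cplx (2^-1 *: (1%:M - JW *m J)))^T *m cplx D = cplx D *m cplx (2^-1 *: (1%:M - J *m JW)).
    by rewrite -cplxT -!cplxM key.
  move=> w1 w2; rewrite /hip /dformC /B /Bdag conjvM trmx_mul.
  by rewrite -(mulmxA _ _ (cplx D)) key' !mulmxA.
split.
  by move=> w; rewrite /B /Bdag !kerP; split; apply: swapP.
split.
  move=> w; rewrite /B kerP; split.
    move=> H.
    have H2 := swapP HJW HJ H.
    set X := cplx JW *m w.
    have HY : cplx J *m w = - X.
      by rewrite /X -{2}H cplxKK // opprK.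
    have HJX : cplx J *m X = w by exact: H2.
    have HJWX : cplx JW *m X = - w by rewrite /X cplxKK.
    exists (2^-1 *: (w - 'i%R *: X)), (2^-1 *: (w + 'i%R *: X)).
    split; [split|split; [split|]].
    - apply/hW/polsetP => //.
      rewrite -scalemxAr mulmxBr -scalemxAr HJWX scalerN opprK.
      rewrite !scalerA mulrC -!scalerA; congr (_ *: _).
      by rewrite scalerBr iiZ opprK addrC.
    - apply/cpolsetP => //.
      rewrite -scalemxAr mulmxBr -scalemxAr HJX HY.
      rewrite !scalerA mulrC -!scalerA; congr (_ *: _).
      by rewrite scaleNr (scalerBr 'i%R) iiZ opprB.
    - apply hcW; apply/cpolsetP => //.
      rewrite -scalemxAr mulmxDr -scalemxAr HJWX.
      rewrite !scalerA mulrC -!scalerA; congr (_ *: _).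
      by rewrite scaleNr (scalerDr 'i%R) iiZ opprD opprK scalerN addrC.
    - apply/polsetP => //.
      rewrite -scalemxAr mulmxDr -scalemxAr HJX HY.
      rewrite !scalerA mulrC -!scalerA; congr (_ *: _).
      by rewrite (scalerDr 'i%R) iiZ addrC.
    - by rewrite -scalerDr addrC half2.
  case=> a [b [[Ha1' Ha2'] [[Hb1' Hb2'] ->]]].
  have Ha1 := proj1 (polsetP _ HJW) (proj1 (hW a) Ha1').
  have Ha2 := proj1 (cpolsetP _ HJ) Ha2'.
  have Hb2 := proj1 (polsetP _ HJ) Hb2'.
  have Hb1 := proj1 (cpolsetP _ HJW) (proj1 (hcW b) Hb1').
  rewrite mulmxDr Ha2 Hb2 mulmxDr -!scalemxAr Ha1 Hb1.
  by rewrite scaleNr iiZ opprK scaleNr scalerN iiZ opprK.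
move=> w [/hW /polsetP E1 _] [E2' _].
have E2 := proj1 (cpolsetP _ HJW) (proj1 (hcW w) E2').
have := E1 HJW; rewrite E2 => /eqP; rewrite scaleNr eqr_oppLR -addr_eq0 -scalerDl.
rewrite scaler_eq0 => /orP[|/eqP //].
by rewrite -mulr2n mulrn_eq0 /= (negPf (neq0Ci _)).
Qed.
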